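(* Let $T$ be a tree on $[n]$ and $G$ a connected graph on $[n]$. Then $T(G)=T$ if and only if $G$ can be obtained from $T$ by adding some subset of the edges permitted by ${\bf oDFS}(T)$.
   Context: Ordered depth-first search. For a connected graph $G$ on $[n]$, ${\bf oDFS}(G)$ is the procedure: set $\mathcal O_0=(1)$ (an ordered list) and $\mathcal A_0=\emptyset$. For $i=0,1,\dots,n-1$: let $v_i$ be the first element of $\mathcal O_i$; let $\mathcal N_i$ be the set of neighbours of $v_i$ in $[n]\setminus(\mathcal A_i\cup\mathcal O_i)$; set $\mathcal A_{i+1}=\mathcal A_i\cup\{v_i\}$; form $\mathcal O_{i+1}$ by removing $v_i$ from the front of $\mathcal O_i$ and then placing the elements of $\mathcal N_i$, in increasing order, at the front. The depth-first tree $T(G)$ is the spanning tree of $G$ with edge set $\{v_iy:0\le i<n,\ y\in\mathcal N_i\}$. For a tree $T$ on $[n]$, an edge $uv\notin E(T)$ is permitted by ${\bf oDFS}(T)$ if there is $i$ with $u,v\in\mathcal O_i$ (stacks computed by running ${\bf oDFS}(T)$). *)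

(* Defs.v *)
(* Vertices are the natural numbers 1..n; a graph on [n] is a
   boolean relation on nat (symmetric, irreflexive, supported on [n]). *)
From mathcomp Require Import all_boot.
Set Implicit Arguments. Unset Strict Implicit. Unset Printing Implicit Defensive.

Definition graph_on (n : nat) (e : rel nat) : Prop :=
  [/\ (forall u v, e u v = e v u),
      (forall u, ~~ e u u) &
      (forall u v, e u v -> (1 <= u <= n) && (1 <= v <= n))].

Definition connected_on (n : nat) (e : rel nat) : Prop :=
  forall u v, 1 <= u <= n -> 1 <= v <= n ->
    exists p : seq nat, path e u p && (last u p == v).

Definition acyclic (e : rel nat) : Prop :=
  forall c : seq nat, uniq c -> 2 < size c -> ~~ cycle e c.

Definition is_tree (n : nat) (e : rel nat) : Prop :=
  [/\ graph_on n e, connected_on n e & acyclic e].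

(* state = (O_i, A_i); O_i is the ordered stack, A_i the set (list) of visited *)
Definition odfs_new (n : nat) (e : rel nat) (st : seq nat * seq nat) : seq nat :=
  [seq y <- iota 1 n | e (head 0 st.1) y && (y \notin st.2) && (y \notin st.1)].

Definition odfs_step (n : nat) (e : rel nat) (st : seq nat * seq nat)
  : seq nat * seq nat :=
  (odfs_new n e st ++ behead st.1, head 0 st.1 :: st.2).

Definition odfs_state (n : nat) (e : rel nat) (i : nat) : seq nat * seq nat :=
  iter i (odfs_step n e) ([:: 1], [::]).

Definition odfs_O n e i : seq nat := (odfs_state n e i).1.
Definition odfs_v n e i : nat := head 0 (odfs_O n e i).
Definition odfs_N n e i : seq nat := odfs_new n e (odfs_state n e i).

Definition dfs_tree (n : nat) (e : rel nat) : rel nat :=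
  fun u v => has (fun i => ((u == odfs_v n e i) && (v \in odfs_N n e i))
                         || ((v == odfs_v n e i) && (u \in odfs_N n e i)))
                 (iota 0 n).

Definition permitted (n : nat) (t : rel nat) (u v : nat) : bool :=
  (u != v) && ~~ t u v &&
  has (fun i => (u \in odfs_O n t i) && (v \in odfs_O n t i)) (iota 0 n).

(* Main.v *)
Require Import Defs.
From mathcomp Require Import all_boot.
Set Implicit Arguments. Unset Strict Implicit. Unset Printing Implicit Defensive.

Definition odfs_A n (e : rel nat) i : seq nat := (odfs_state n e i).2.

Lemma OS n e i : odfs_O n e i.+1 = odfs_N n e i ++ behead (odfs_O n e i).
Proof. by []. Qed.
Lemma AS n e i : odfs_A n e i.+1 = odfs_v n e i :: odfs_A n e i.
Proof. by []. Qed.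
Lemma O0 n e : odfs_O n e 0 = [:: 1]. Proof. by []. Qed.
Lemma A0 n e : odfs_A n e 0 = [::]. Proof. by []. Qed.

Lemma mem_N n e i y : (y \in odfs_N n e i) =
  [&& y \in iota 1 n, e (odfs_v n e i) y, y \notin odfs_A n e i & y \notin odfs_O n e i].
Proof. by rewrite /odfs_N /odfs_new mem_filter andbA andbA andbC !andbA. Qed.

Lemma inv n e i : uniq (odfs_O n e i) /\ (forall x, x \in odfs_O n e i -> x \notin odfs_A n e i).
Proof.
elim: i => [|i [U D]]; first by rewrite O0 A0.
have hb : forall x, x \in behead (odfs_O n e i) -> x != odfs_v n e i.
  move=> x; rewrite /odfs_v; case: (odfs_O n e i) U => //= a s /andP [ha _] xs.
  by apply/eqP => ?; subst x; rewrite xs in ha.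
split.
  rewrite OS cat_uniq; apply/and3P; split.
  - exact/filter_uniq/iota_uniq.
  - apply/hasPn => x xb; rewrite mem_N; apply/negP => /and4P [_ _ _ /negP]; apply.
    by move: xb; case: (odfs_O n e i) => //= a s xs; rewrite in_cons xs orbT.
  - by move: U; case: (odfs_O n e i) => //= a s /andP [].
move=> x; rewrite OS AS mem_cat in_cons => /orP [|xb].
  rewrite mem_N => /and4P [xi ex xa xo]; rewrite negb_or xa andbT.
  apply/eqP => xv; move: xo xi; rewrite xv /odfs_v.
  case: (odfs_O n e i) => [|a s] /=; last by rewrite in_cons eqxx.
  by rewrite mem_iota.
rewrite negb_or (hb _ xb) /=; apply D.
by move: xb; case: (odfs_O n e i) => //= a s xs; rewrite in_cons xs orbT.
Qed.

Lemma behead_mem (s : seq nat) x : x \in s -> x != head 0 s -> x \in behead s.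
Proof. by case: s => //= a s; rewrite in_cons => /orP [/eqP->|]; rewrite ?eqxx. Qed.

Lemma behead_sub (s : seq nat) x : x \in behead s -> x \in s.
Proof. by case: s => //= a s xs; rewrite in_cons xs orbT. Qed.

Lemma Apers n e k i x : k <= i -> x \in odfs_A n e k -> x \in odfs_A n e i.
Proof.
move=> /subnK <-; elim: (i - k) => [//|d IH] xa.
by rewrite addSn AS in_cons IH ?orbT.
Qed.

Lemma Opers n e k i x : k <= i -> x \in odfs_O n e k ->
  (x \in odfs_O n e i) || (x \in odfs_A n e i).
Proof.
move=> /subnK <-; elim: (i - k) => [|d IH] xo; first by rewrite add0n xo.
rewrite addSn OS AS mem_cat in_cons.
case/orP: (IH xo) => [xO|->]; last by rewrite !orbT.
case: (eqVneq x (odfs_v n e (d + k))) => [xv|xv]; first by rewrite xv !orbT.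
by rewrite (behead_mem xO xv) orbT.
Qed.

Lemma memA n e i x : (x \in odfs_A n e i) = has (fun j => odfs_v n e j == x) (iota 0 i).
Proof.
elim: i => [|i IH]; first by [].
by rewrite AS in_cons IH -addn1 iotaD has_cat /= orbF orbC eq_sym add0n.
Qed.

Lemma sizeA n e i : size (odfs_A n e i) = i.
Proof. by elim: i => // i IH; rewrite AS /= IH. Qed.

Lemma dfs_sym n e u v : dfs_tree n e u v = dfs_tree n e v u.
Proof. by apply: eq_has => i; rewrite orbC. Qed.

Lemma dfs_edge n e i y : i < n -> y \in odfs_N n e i -> dfs_tree n e (odfs_v n e i) y.
Proof. by move=> lt yN; apply/hasP; exists i; rewrite ?mem_iota ?eqxx ?yN. Qed.

Lemma dfs_sub n e u v : graph_on n e -> dfs_tree n e u v -> e u v.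
Proof.
case=> sym _ _ /hasP [i _] /orP [] /andP [/eqP -> ]; rewrite mem_N => /and4P [_ ? _ _] //.
by rewrite sym.
Qed.

Lemma Oin n e i x : 0 < n -> x \in odfs_O n e i -> x \in iota 1 n.
Proof.
move=> n0; elim: i x => [|i IH] x.
  by rewrite O0 inE => /eqP ->; rewrite mem_iota leqnn add1n ltnS.
rewrite OS mem_cat => /orP [|/behead_sub /IH //].
by rewrite mem_N => /andP [].
Qed.

Lemma noO0 n e i : graph_on n e -> odfs_O n e i = [::] -> odfs_O n e i.+1 = [::].
Proof.
case=> _ _ gr Oe; rewrite OS Oe /= cats0.
case E: (odfs_N n e i) => [//|y s].
have : y \in odfs_N n e i by rewrite E mem_head.
rewrite mem_N => /and4P [_ ey _ _].
by move: (gr _ _ ey); rewrite /odfs_v Oe.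
Qed.

Lemma Auniq n e m : 0 < n -> (forall k, k < m -> odfs_O n e k != [::]) ->
  uniq (odfs_A n e m) && all (mem (iota 1 n)) (odfs_A n e m).
Proof.
move=> n0; elim: m => [//|m IH] H.
have /andP [U S] := IH (fun k lk => H k (ltnW lk)).
have : odfs_O n e m != [::] := H m (ltnSn m).
rewrite AS /= U S andbT /odfs_v.
case E: (odfs_O n e m) => [//|a s] _ /=.
have aO : a \in odfs_O n e m by rewrite E mem_head.
by rewrite (proj2 (inv n e m) a aO) (Oin n0 aO).
Qed.

Lemma cross (e : rel nat) (P : pred nat) a p : path e a p -> P a -> ~~ P (last a p) ->
  exists a' b', [/\ P a', ~~ P b' & e a' b'].
Proof.
elim: p a => [|b p IH] a /=; first by move=> _ ->.
move=> /andP [eab pp] Pa; case Pb: (P b); first exact: IH.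
by move=> _; exists a, b; rewrite Pb.
Qed.

Lemma visit n e x : graph_on n e -> connected_on n e -> 1 <= x <= n ->
  x \in odfs_A n e n.
Proof.
move=> g c xn; have n0 : 0 < n by case/andP: xn => /leq_trans; apply.
apply/negPn/negP => xA.
have oneA : 1 \in odfs_A n e n by apply: (@Apers n e 1) => //; rewrite AS in_cons.
have [p /andP [pp /eqP px]] := c 1 x (ltac:(by rewrite /= n0)) xn.
have [a [b [aA bA eab]]] := @cross e (mem (odfs_A n e n)) 1 p pp oneA (ltac:(by rewrite px)).
have [j /[!mem_iota] /andP [_ jn] /eqP vja] := hasP (etrans (esym (memA n e n a)) aA).
rewrite add0n in jn.
case: g => sym irr gr.
have bi : b \in iota 1 n by have /andP [_ /andP [b1 bn]] := gr _ _ eab; rewrite mem_iota b1 add1n ltnS.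
have bO1 : b \in odfs_O n e j.+1.
  rewrite OS mem_cat; case bOj: (b \in odfs_O n e j).
    rewrite (@behead_mem _ b bOj) ?orbT //.
    by apply/eqP => bv; move: bA; rewrite bv -/(odfs_v n e j) vja aA.
  rewrite mem_N bi vja eab bOj andbT /=.
  apply/orP; left; apply/negP => bAj; have bAn := @Apers n e j n b (ltnW jn) bAj; exact: (negP bA bAn).
have bOn : b \in odfs_O n e n.
  by case/orP: (Opers jn bO1) => // bAn; case: (negP bA bAn).
have ne : forall k, k < n -> odfs_O n e k != [::].
  move=> k kn; apply/eqP => Ok.
  have : forall d, odfs_O n e (d + k) = [::].
    by elim=> [//|d IH]; rewrite addSn; apply: noO0 => //; split.
  by move/(_ (n - k)); rewrite subnK ?(ltnW kn) // => On; rewrite On in bOn.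
have /andP [U Sb] := Auniq n0 ne.
have : uniq (b :: odfs_A n e n) by rewrite /= bA U.
move/uniq_leq_size => /(_ (iota 1 n)).
rewrite /= size_iota sizeA ltnn => H; apply: notF; apply: H.
move=> y; rewrite in_cons => /orP [/eqP -> //|]; exact: (allP Sb).
Qed.

Definition reach (d : rel nat) x :=
  (exists p, path d 1 p && (last 1 p == x)) /\ (exists q, path d x q && (last x q == 1)).

Lemma headin (s : seq nat) : head 0 s != 0 -> head 0 s \in s.
Proof. by case: s => //= a s _; rewrite mem_head. Qed.

Lemma reach_ext d x y : reach d x -> d x y -> d y x -> reach d y.
Proof.
move=> [[p /andP [pp /eqP px]] [q /andP [qq qx]]] dxy dyx; split.
  by exists (rcons p y); rewrite rcons_path pp px dxy last_rcons eqxx.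
by exists (x :: q); rewrite /= dyx qq.
Qed.

Lemma reach_inv n e m : graph_on n e -> m <= n -> forall x, x != 0 ->
  (x \in odfs_O n e m) || (x \in odfs_A n e m) -> reach (dfs_tree n e) x.
Proof.
move=> g; elim: m => [_ x _|m IH lt x x0].
  rewrite O0 A0 orbF inE => /eqP ->; split; by exists [::].
have IH' := IH (ltnW lt).
have vO : odfs_v n e m != 0 -> odfs_v n e m \in odfs_O n e m by exact: headin.
rewrite OS AS mem_cat in_cons -!orbA => /or4P [xN|xb|/eqP xv|xA].
- have := xN; rewrite mem_N => /and4P [_ exv _ _].
  have v0 : odfs_v n e m != 0.
    by case: g => _ _ gr; have /andP [/andP [v1 _] _] := gr _ _ exv; rewrite -lt0n.
  apply: (@reach_ext _ (odfs_v n e m)); first by apply: IH' => //; rewrite vO.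
    exact: dfs_edge.
  by rewrite dfs_sym; apply: dfs_edge.
- by apply: IH' => //; rewrite (behead_sub xb).
- by apply: IH' => //; rewrite xv vO // -xv.
- by apply: IH' => //; rewrite xA orbT.
Qed.

Lemma reach_all n e x : graph_on n e -> connected_on n e -> 1 <= x <= n ->
  reach (dfs_tree n e) x.
Proof.
move=> g c xn; apply: (@reach_inv n e n) => //.
  by case/andP: xn; rewrite lt0n.
by rewrite (visit g c xn) orbT.
Qed.

Lemma TT n T u v : is_tree n T -> dfs_tree n T u v = T u v.
Proof.
case=> g c ac; have g' := g; case: g' => sym irr gr.
apply/idP/idP; first exact: dfs_sub.
move=> Tuv; case duv: (dfs_tree n T u v) => //.
have /andP [un vn] := gr _ _ Tuv.
have [_ [q /andP [qq /eqP qu]]] := reach_all g c un.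
have [[p /andP [pp /eqP pv]] _] := reach_all g c vn.
have pw : path (dfs_tree n T) u (q ++ p) by rewrite cat_path qq qu pp.
have : last u (q ++ p) = v by rewrite last_cat qu pv.
case: (shortenP pw) => p' pp' up' _ lp'.
have : ~~ cycle T (u :: p').
  apply: ac => //.
  case: p' pp' up' lp' => [/= _ _ uv|y [|z s]] //=.
    by move: (irr u); rewrite {2}uv Tuv.
  by move=> /andP [dy _] _ yv; rewrite -yv dy in duv.
move/negP => H; exfalso; apply: H; rewrite /= rcons_path lp' -sym Tuv andbT.
by apply: (sub_path _ pp') => a b; exact: dfs_sub.
Qed.

Lemma st_eq n e1 e2 :
  (forall i, i < n -> odfs_state n e1 i = odfs_state n e2 i ->
     odfs_new n e1 (odfs_state n e1 i) = odfs_new n e2 (odfs_state n e1 i)) ->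
  forall i, i <= n -> odfs_state n e1 i = odfs_state n e2 i.
Proof.
move=> H; elim=> [//|i IH lt].
have E := IH (ltnW lt).
rewrite /odfs_state !iterS -!/(odfs_state _ _ _) /odfs_step -E.
by rewrite (H i lt E).
Qed.

Lemma dfs_eq n e1 e2 :
  (forall i, i < n -> odfs_state n e1 i = odfs_state n e2 i ->
     odfs_new n e1 (odfs_state n e1 i) = odfs_new n e2 (odfs_state n e1 i)) ->
  forall u v, dfs_tree n e1 u v = dfs_tree n e2 u v.
Proof.
move=> H u v; apply: eq_in_has => i; rewrite mem_iota add0n => /andP [_ lt].
have E := st_eq H (ltnW lt).
have Ev : odfs_v n e1 i = odfs_v n e2 i by rewrite /odfs_v /odfs_O E.
have EN : odfs_N n e1 i = odfs_N n e2 i by rewrite /odfs_N (H i lt E) E.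
by rewrite Ev EN.
Qed.

Lemma first_visit n e u v : graph_on n e -> connected_on n e ->
  1 <= u <= n -> 1 <= v <= n ->
  exists2 j, j < n & ((odfs_v n e j == u) && (v \notin odfs_A n e j))
                  || ((odfs_v n e j == v) && (u \notin odfs_A n e j)).
Proof.
move=> g c un vn.
have exP : exists m, (u \in odfs_A n e m) || (v \in odfs_A n e m)
  by exists n; rewrite (visit g c un).
case: (ex_minnP exP) => m Pm minm.
have mn : m <= n by apply: minm; rewrite (visit g c un).
case: m Pm minm mn => [|j]; first by rewrite A0.
move=> Pj minm jn; exists j => //.
have nP : ~~ ((u \in odfs_A n e j) || (v \in odfs_A n e j)).
  by apply/negP => /minm; rewrite ltnn.
move: Pj nP; rewrite AS !in_cons negb_or => H /andP [nu nv].
rewrite (negbTE nu) (negbTE nv) !orbF in H; rewrite nu nv !andbT.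
by case/orP: H => /eqP ->; rewrite eqxx ?orbT.
Qed.

Lemma one_side n e j a b : j < n -> odfs_v n e j = a -> a != 0 -> e a b ->
  b \notin odfs_A n e j -> b \in iota 1 n -> ~~ dfs_tree n e a b ->
  (a \in odfs_O n e j) && (b \in odfs_O n e j).
Proof.
move=> jn va a0 eab bA bi nd.
have aO : a \in odfs_O n e j by move: a0; rewrite -va; exact: headin.
rewrite aO /=; case bO: (b \in odfs_O n e j) => //.
have : b \in odfs_N n e j by rewrite mem_N bi va eab bA bO.
by move/(dfs_edge jn); rewrite va (negbTE nd).
Qed.

Lemma perm_from n e u v : graph_on n e -> connected_on n e -> e u v ->
  ~~ dfs_tree n e u v ->
  exists2 j, j < n & (u \in odfs_O n e j) && (v \in odfs_O n e j).
Proof.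
move=> g c euv nd; have g' := g; case: g' => sym _ gr.
have /andP [un vn] := gr _ _ euv.
have iu : u \in iota 1 n by case/andP: un => u1 u2; rewrite mem_iota u1 add1n ltnS.
have iv : v \in iota 1 n by case/andP: vn => u1 u2; rewrite mem_iota u1 add1n ltnS.
have u0 : u != 0 by case/andP: un; rewrite lt0n.
have v0 : v != 0 by case/andP: vn; rewrite lt0n.
have [j jn /orP [/andP [/eqP vu vA]|/andP [/eqP vv uA]]] := first_visit g c un vn;
  exists j => //.
  exact: one_side.
rewrite andbC; apply: one_side => //; first by rewrite -sym.
by rewrite dfs_sym.
Qed.

Lemma new_eq n e1 e2 st :
  (forall y, y \in iota 1 n -> y \notin st.2 -> y \notin st.1 ->
     e1 (head 0 st.1) y = e2 (head 0 st.1) y) ->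
  odfs_new n e1 st = odfs_new n e2 st.
Proof.
move=> H; apply: eq_in_filter => y yi.
case: (boolP (y \notin st.2)) => y2; last by rewrite !andbF.
case: (boolP (y \notin st.1)) => y1; last by rewrite !andbF.
by rewrite H.
Qed.

Theorem lemma2 (n : nat) (T G : rel nat) :
  is_tree n T -> graph_on n G -> connected_on n G ->
  ((forall u v, dfs_tree n G u v = T u v) <->
   exists S : rel nat,
     (forall u v, S u v -> permitted n T u v) /\
     (forall u v, G u v = T u v || S u v)).
Proof.
move=> tr gG cG; have gG' := gG; case: gG' => symG irrG grG.
split.
- move=> H.
  have TG : forall u v, T u v -> G u v by move=> u v; rewrite -H; exact: dfs_sub.
  have Hn : forall i, i < n -> odfs_state n G i = odfs_state n T i ->
      odfs_new n G (odfs_state n G i) = odfs_new n T (odfs_state n G i).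
    move=> i lt _; apply: new_eq => y yi y2 y1.
    apply/idP/idP; last exact: TG.
    move=> Gy; rewrite -H; apply: (dfs_edge lt).
    by rewrite mem_N yi Gy y2 y1.
  have E := st_eq Hn.
  exists (fun u v => G u v && ~~ T u v); split; last first.
    move=> u v; case: (boolP (T u v)) => Tuv; first by rewrite TG. by rewrite /= andbT.
  move=> u v /andP [Guv nT]; rewrite /permitted nT andbT.
  have -> : u != v by apply/eqP => uv; move: (irrG u); rewrite {2}uv Guv.
  have [j jn /andP [uO vO]] := perm_from gG cG Guv (ltac:(by rewrite H)).
  apply/hasP; exists j; first by rewrite mem_iota add0n.
  by rewrite /odfs_O -(E j (ltnW jn)) uO vO.
- move=> [S [HS HG]] u v; rewrite -(TT _ _ tr); apply: dfs_eq => i lt E.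
  rewrite E; apply: new_eq => y yi y2 y1; rewrite HG.
  case: (boolP (T _ y)) => //= _; apply/negP => /HS /andP [_ /hasP [k]].
  rewrite mem_iota add0n => /andP [_ kn] /andP [hO yO].
  case: (leqP k i) => ki.
    by case/orP: (Opers ki yO) => /= yy; [move: y1 | move: y2]; rewrite /odfs_O /odfs_A yy.
  have hA : head 0 (odfs_state n T i).1 \in odfs_A n T k.
    by apply: (Apers ki); rewrite AS in_cons eqxx.
  by move: (proj2 (inv n T k) _ hO); rewrite hA.
Qed.
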